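(* Let $x_1,\dots,x_n$ be independent random variables in $[0,1]$ with $\mathbb{E}[x_i]\le\nu$ for all $i$, for some $\nu\in[0,1]$. For any $c\ge1$ with $c\nu<1$ and any $\lambda\in\big[0,\frac{\ln c}{(1-c\nu)(4n-3)}\big]$, $$\mathbb{E}\exp\big(\lambda(x_1+\dots+x_n)^2\big)\le\exp\big(\lambda cn\nu(1+cn\nu)\big).$$ *)

(* Defs.v *)
From HB Require Import structures.
From mathcomp Require Import all_boot all_order all_algebra.
From mathcomp Require Import all_classical all_reals all_analysis.
Set Implicit Arguments.
Unset Strict Implicit.
Unset Printing Implicit Defensive.
Import Order.TTheory GRing.Theory Num.Theory.
Local Open Scope classical_set_scope.
Local Open Scope ring_scope.

Definition mutually_independent d (T : measurableType d) (R : realType)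
    (P : probability T R) (n : nat) (X : 'I_n -> {RV P >-> R}) : Prop :=
  forall (S : {set 'I_n}) (B : 'I_n -> set R),
    (forall i, measurable (B i)) ->
    P (\bigcap_(i in [set j | j \in S]) (X i @^-1` B i)) =
    (\prod_(i in S) P (X i @^-1` B i))%E.

(* Main.v *)
Require Import Defs.
From HB Require Import structures.
From mathcomp Require Import all_boot all_order all_algebra.
From mathcomp Require Import all_classical all_reals all_analysis.
From mathcomp Require Import ring lra.
Import Order.TTheory GRing.Theory Num.Theory.
Local Open Scope classical_set_scope.
Local Open Scope ring_scope.

Set Implicit Arguments.
Unset Strict Implicit.


Section A.
Variable R : realType.

Local Open Scope convex_scope.
Lemma expR_conv (t a b : R) : 0 <= t <= 1 ->
  expR (t * a + (1 - t) * b) <= t * expR a + (1 - t) * expR b.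
Proof.
move=> /andP[t0 t1].
have := convex_expR (@Itv01 _ _ t0 t1) a b.
by rewrite !convRE.
Qed.
Local Close Scope convex_scope.

Lemma key_ineq (c mu y : R) : 1 <= c -> 0 <= mu -> c * mu < 1 -> 0 <= y ->
  y <= ln c / (1 - c * mu) -> 1 + mu * (expR y - 1) <= expR (c * mu * y).
Proof.
move=> c1 mu0 u1 y0 yY.
set u := c * mu in u1 yY *; set Y := ln c / (1 - u) in yY.
have c0 : 0 < c by lra.
have u0 : 0 <= u by rewrite /u mulr_ge0 //; lra.
have u1' : 0 < 1 - u by lra.
have YE : (1 - u) * Y = ln c by rewrite /Y; field; lra.
have ey : expR ((1 - u) * Y) = c by rewrite YE lnK // posrE.
set w := expR (u * Y).
have eY : expR Y = c * w.
  by rewrite -ey /w -expRD; congr expR; ring.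
have cln : c - 1 <= c * ln c.
  have := expR_ge1Dx (- ln c); rewrite expRN lnK ?posrE // => h.
  have : c * (1 + - ln c) <= c * c^-1 by rewrite ler_pM2l.
  rewrite mulfV; last by lra.
  lra.
have wge : 1 + u * Y <= w by exact: expR_ge1Dx.
have endp : 1 - mu + mu * expR Y <= w.
  rewrite eY.
  have h1 : (1 - u) * (1 + u * Y) <= (1 - u) * w by rewrite ler_pM2l.
  have h2 : u * ln c >= u - mu.
    rewrite /u -mulrA; have : mu * (c - 1) <= mu * (c * ln c) by rewrite ler_wpM2l.
    lra.
  have h3 : (1 - u) * (1 + u * Y) = 1 - u + u * ln c by rewrite -YE; ring.
  rewrite /u in h1 h2 h3 *; nra.
have [->|yp] := eqVneq y 0.
  by rewrite expR0 subrr mulr0 addr0 mulr0 expR0.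
have ypos : 0 < y by rewrite lt_neqAle eq_sym yp y0.
have eYgt : 1 < expR Y.
  by rewrite -expR0 ltr_expR; lra.
set D := expR Y - 1.
have D0 : 0 < D by rewrite /D; lra.
set t := (expR y - 1) / D.
have t0 : 0 <= t.
  apply: divr_ge0; last lra.
  rewrite subr_ge0 -[X in X <= _]expR0 ler_expR; lra.
have t1 : t <= 1.
  rewrite /t ler_pdivrMr // mul1r /D lerD2r ler_expR; lra.
have tE : (1 - t) + t * expR Y = expR y.
  rewrite /t; have := D0; rewrite /D => D0'; field; lra.
have c1' : expR ((1 - u) * y) <= u * expR 0 + (1 - u) * expR y.
  have := @expR_conv u 0 y; rewrite mulr0 add0r; apply; lra.
have c2' : expR (u * Y + (1 - u) * y) <= u * expR Y + (1 - u) * expR y.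
  by apply: expR_conv; lra.
rewrite expRD -/w expR0 mulr1 in c1' c2'.
have comb : expR ((1 - u) * y) * ((1 - t) + t * w) <= expR y.
  have : (1 - t) * expR ((1 - u) * y) + t * (w * expR ((1 - u) * y))
      <= (1 - t) * (u + (1 - u) * expR y) + t * (u * expR Y + (1 - u) * expR y).
    by apply: lerD; apply: ler_wpM2l => //; lra.
  have : (1 - t) * (u + (1 - u) * expR y) + t * (u * expR Y + (1 - u) * expR y)
     = u * ((1 - t) + t * expR Y) + (1 - u) * expR y by ring.
  rewrite tE; lra.
have ey2 : expR y = expR (u * y) * expR ((1 - u) * y) by rewrite -expRD; congr expR; ring.
rewrite ey2 mulrC in comb.
have := comb; rewrite ler_pM2r ?expR_gt0 // => comb'.
apply: le_trans comb'.
have : 1 + mu * (expR y - 1) = (1 - t) + t * (1 - mu + mu * expR Y).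
  rewrite -tE; ring.
move=> ->.
apply: lerD => //; apply: ler_wpM2l => //.
Qed.

Definition ffcons (A : finType) n (x : A) (g : {ffun 'I_n -> A}) : {ffun 'I_n.+1 -> A} :=
  [ffun i => if unlift ord0 i is Some j then g j else x].

Lemma ffcons0 (A : finType) n (x : A) (g : {ffun 'I_n -> A}) : ffcons x g ord0 = x.
Proof. by rewrite /ffcons ffunE unlift_none. Qed.

Lemma ffconsS (A : finType) n (x : A) (g : {ffun 'I_n -> A}) j :
  ffcons x g (lift ord0 j) = g j.
Proof. by rewrite /ffcons ffunE liftK. Qed.

Lemma sum_ffunS (A : finType) n (G : {ffun 'I_n.+1 -> A} -> R) :
  \sum_(f : {ffun 'I_n.+1 -> A}) G f =
  \sum_(x : A) \sum_(g : {ffun 'I_n -> A}) G (ffcons x g).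
Proof.
pose h (q : A * {ffun 'I_n -> A}) := ffcons q.1 q.2.
pose h' (f : {ffun 'I_n.+1 -> A}) := (f ord0, [ffun j => f (lift ord0 j)]).
have hK : cancel h' h.
  move=> f; apply/ffunP => i; rewrite /h /h' /ffcons /= ffunE.
  by case: unliftP => [j ->|->] //; rewrite ffunE.
have h'K : cancel h h'.
  move=> [x g]; rewrite /h /h' /= ffcons0; congr pair.
  by apply/ffunP => j; rewrite ffunE ffconsS.
rewrite (reindex h); last by apply: onW_bij; exists h'.
rewrite pair_bigA /=; apply: eq_bigr => -[x g] _ /=; done.
Qed.


Definition psi (u : R) (k : nat) (a : R) := (a + k%:R * u) ^+ 2 + k%:R * u.

Lemma step_ineq (J : finType) (p v : J -> R) (c mu lam a : R) (k : nat) :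
  1 <= c -> 0 <= mu -> c * mu < 1 -> 0 <= lam -> 0 <= a ->
  (forall j, 0 <= p j) -> (forall j, 0 <= v j <= 1) ->
  \sum_j p j <= 1 -> \sum_j p j * v j <= mu ->
  lam * (2 * (a + k%:R * (c * mu)) + 1) <= ln c / (1 - c * mu) ->
  \sum_j p j * expR (lam * psi (c * mu) k (a + v j)) <=
  expR (lam * psi (c * mu) k.+1 a).
Proof.
move=> c1 mu0 u1 lam0 a0 p0 v01 sp spv hy.
set u := c * mu in u1 hy *.
have u0 : 0 <= u by rewrite /u mulr_ge0 //; lra.
set E0 := expR (lam * psi u k a).
set E1 := expR (lam * psi u k (a + 1)).
set b := a + k%:R * u.
have b0 : 0 <= b by rewrite /b addr_ge0 // mulr_ge0.
have conv j : expR (lam * psi u k (a + v j)) <= (1 - v j) * E0 + v j * E1.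
  have /andP[v0 v1] := v01 j.
  apply: le_trans (_ : expR ((1 - v j) * (lam * psi u k a) + (1 - (1 - v j)) * (lam * psi u k (a + 1))) <= _).
    rewrite ler_expR /psi -subr_ge0.
    rewrite [X in 0 <= X](_ : _ = lam * (v j * (1 - v j))); last by ring.
    by apply: mulr_ge0 => //; apply: mulr_ge0; lra.
  have := @expR_conv (1 - v j) (lam * psi u k a) (lam * psi u k (a + 1)).
  rewrite -/E0 -/E1 opprB addrCA subrr addr0; apply; lra.
have E01 : E0 <= E1.
  rewrite ler_expR ler_wpM2l // /psi lerD2r -/b.
  have -> : a + 1 + k%:R * u = b + 1 by rewrite /b; ring.
  nra.
apply: le_trans (_ : \sum_j p j * ((1 - v j) * E0 + v j * E1) <= _).
  by apply: ler_sum => j _; apply: ler_wpM2l.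
have -> : \sum_j p j * ((1 - v j) * E0 + v j * E1) =
    (\sum_j p j) * E0 + (\sum_j p j * v j) * (E1 - E0).
  rewrite !mulr_suml -big_split /=; apply: eq_bigr => j _; ring.
have E00 : 0 <= E0 by apply: expR_ge0.
apply: le_trans (_ : E0 + mu * (E1 - E0) <= _).
  apply: lerD; first by rewrite -[X in _ <= X]mul1r ler_wpM2r.
  by apply: ler_wpM2r; lra.
set y := lam * (2 * b + 1).
have y0 : 0 <= y by rewrite /y mulr_ge0 //; lra.
have E1E : E1 = E0 * expR y.
  by rewrite /E1 /E0 -expRD /psi /y /b; congr expR; ring.
have key := key_ineq c1 mu0 u1 y0 hy.
rewrite -/u in key.
have -> : expR (lam * psi u k.+1 a) = E0 * expR (u * y) * expR (lam * u ^+ 2).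
  by rewrite /E0 -!expRD /psi /y /b; congr expR; rewrite mulrSr; ring.
apply: le_trans (_ : E0 * expR (u * y) <= _); last first.
  rewrite -[X in X <= _]mulr1 ler_wpM2l ?mulr_ge0 ?expR_ge0 //.
  by rewrite -expR0 ler_expR mulr_ge0 // sqr_ge0.
have -> : E0 + mu * (E1 - E0) = E0 * (1 + mu * (expR y - 1)) by rewrite E1E; ring.
by rewrite ler_wpM2l.
Qed.


Lemma alg_bound (J : finType) (v : J -> R) (c mu lam M : R) n :
  1 <= c -> 0 <= mu -> c * mu < 1 -> 0 <= lam ->
  lam * (2 * M - 1) <= ln c / (1 - c * mu) ->
  (forall j, 0 <= v j <= 1) ->
  forall (p : 'I_n -> J -> R) a, (forall i j, 0 <= p i j) ->
  (forall i, \sum_j p i j <= 1) -> (forall i, \sum_j p i j * v j <= mu) ->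
  0 <= a -> a + n%:R <= M ->
  \sum_(f : {ffun 'I_n -> J}) expR (lam * (a + \sum_i v (f i)) ^+ 2) * \prod_i p i (f i)
  <= expR (lam * psi (c * mu) n a).
Proof.
move=> c1 mu0 u1 lam0 hM v01.
have u0 : 0 <= c * mu by rewrite mulr_ge0 //; lra.
elim: n => [|n IH] p a p0 sp spv a0 aM.
  rewrite (eq_bigr (fun _ => expR (lam * psi (c * mu) 0 a))); last first.
    by move=> f _; rewrite !big_ord0 mulr1 addr0 /psi !mul0r !addr0.
  by rewrite sumr_const card_ffun card_ord expn0 mulr1n.
rewrite sum_ffunS.
apply: le_trans (_ : \sum_x p ord0 x * expR (lam * psi (c * mu) n (a + v x)) <= _).
  apply: ler_sum => x _.
  rewrite [X in X <= _](_ : _ = p ord0 x * \sum_(g : {ffun 'I_n -> J})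
     expR (lam * (a + v x + \sum_j v (g j)) ^+ 2) * \prod_j p (lift ord0 j) (g j)); last first.
    rewrite big_distrr /=; apply: eq_bigr => g _.
    rewrite big_ord_recl big_ord_recl ffcons0.
    have e1 : \sum_(i < n) v (ffcons x g (lift ord0 i)) = \sum_(j < n) v (g j).
      by under eq_bigr do rewrite ffconsS.
    have e2 : \prod_(i < n) p (lift ord0 i) (ffcons x g (lift ord0 i)) =
        \prod_(j < n) p (lift ord0 j) (g j).
      by under eq_bigr do rewrite ffconsS.
    by rewrite e1 e2 addrA mulrCA.
  apply: (ler_wpM2l (p0 ord0 x)); apply: (IH (fun i => p (lift ord0 i))) => //.
  - by have /andP[? ?] := v01 x; lra.
  - by have /andP[? ?] := v01 x; move: aM; rewrite -addn1 natrD; lra.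
apply: step_ineq => //.
- move: aM; rewrite -addn1 natrD => aM.
  apply: le_trans hM; apply: ler_wpM2l => //.
  have : n%:R * (c * mu) <= n%:R by rewrite ler_piMr //; lra.
  lra.
Qed.

End A.


Section C.
Variable R : realType.

Definition Iv (K : nat) (j : 'I_K.+1) : set R :=
  if (j == 0 :> nat) then `]-oo, 0]%classic
  else `]((j%:R - 1) / K%:R), (j%:R / K%:R)]%classic.

Lemma Iv_mem K (j : 'I_K.+1) x : Iv j x <->
  (if (j == 0 :> nat) then x <= 0 else ((j%:R - 1) / K%:R < x) && (x <= j%:R / K%:R)).
Proof. by rewrite /Iv; case: ifP => _ /=; rewrite in_itv /= ?andbT. Qed.

Lemma Iv_measurable K (j : 'I_K.+1) : measurable (Iv j).
Proof. by rewrite /Iv; case: ifP => _; exact: measurable_itv. Qed.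

Lemma Iv_bound K (j : 'I_K.+1) x : (0 < K)%N -> 0 <= x -> Iv j x ->
  x <= j%:R / K%:R /\ j%:R / K%:R <= x + K%:R^-1.
Proof.
move=> K0 x0; rewrite Iv_mem; have Kp : 0 < K%:R :> R by rewrite ltr0n.
case: ifP => [/eqP j0 x0'|_ /andP[h1 h2]].
  rewrite j0 mul0r; split => //.
  by apply: addr_ge0 => //; rewrite invr_ge0 ltW.
split => //.
move: h1; rewrite ltr_pdivrMr // => h1.
rewrite ler_pdivrMr // mulrDl mulVf ?gt_eqF //; lra.
Qed.

Lemma Iv_sum K x : (0 < K)%N -> 0 <= x <= 1 ->
  \sum_(j < K.+1) (\1_(Iv j) x : R) = 1.
Proof.
move=> K0 /andP[x0 x1]; have Kp : 0 < K%:R :> R by rewrite ltr0n.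
pose b (k : nat) : R := ((x <= k%:R / K%:R)%R : bool)%:R.
have ind j : (\1_(@Iv K j) x : R) = if (j == 0 :> nat) then b 0%N else b j - b j.-1.
  rewrite indicE.
  have -> : (x \in Iv j) = (if (j == 0 :> nat) then x <= 0
      else ((j%:R - 1) / K%:R < x) && (x <= j%:R / K%:R)).
    by apply/idP/idP => [/set_mem/Iv_mem//|h]; apply/mem_set/Iv_mem.
  case: ifP => jz; first by rewrite /b mul0r.
  rewrite /b; have -> : ((j.-1)%:R : R) = j%:R - 1.
    by case: (nat_of_ord j) jz => //= k _; rewrite -addn1 natrD addrK.
  case: (lerP x (j%:R / K%:R)) => h; case: (lerP x ((j%:R - 1) / K%:R)) => h';
   rewrite ?andbT ?andbF /=; try lra.
  have : (j%:R - 1) / K%:R <= j%:R / K%:R :> R.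
    by rewrite ler_pM2r ?invr_gt0 //; lra.
  lra.
rewrite big_ord_recl.
rewrite (eq_bigr (fun i : 'I_K => b i.+1 - b i)); last first.
  by move=> i _; rewrite ind /=.
rewrite ind /= -(big_mkord xpredT (fun i => b i.+1 - b i)) telescope_sumr //.
rewrite addrC subrK /b mulfV ?gt_eqF //.
by rewrite x1.
Qed.
Lemma Iv_vsum K x : (0 < K)%N -> 0 <= x <= 1 ->
  \sum_(j < K.+1) (j%:R / K%:R * \1_(Iv j) x : R) <= x + K%:R^-1.
Proof.
move=> K0 hx.
apply: le_trans (_ : \sum_(j < K.+1) (x + K%:R^-1) * \1_(Iv j) x <= _); last first.
  by rewrite -mulr_sumr (Iv_sum K0 hx) mulr1.
apply: ler_sum => j _; rewrite indicE.
case: (boolP (x \in Iv j)) => h; last by rewrite /= !mulr0.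
have /andP[x0 _] := hx.
have [_ hb] := Iv_bound K0 x0 (set_mem h).
by rewrite /= !mulr1.
Qed.

End C.


Section M.
Context d (T : measurableType d) (R : realType) (P : probability T R) (n : nat)
  (X : 'I_n -> {RV P >-> R}).
Hypothesis hind : mutually_independent X.
Hypothesis hX01 : forall i t, 0 <= X i t <= 1.
Variable K : nat.
Hypothesis K0 : (0 < K)%N.

Definition pre i (j : 'I_K.+1) := X i @^-1` Iv (R:=R) j.

Lemma mpre i j : measurable (pre i j).
Proof. exact: (measurable_funPTI (X i) (Iv_measurable j)). Qed.

Lemma ind_pre i (j : 'I_K.+1) t : (\1_(pre i j) t : R) = (\1_(Iv j) (X i t) : R).
Proof.
by rewrite !indicE; congr (_%:R); apply/idP/idP => /set_mem h; apply/mem_set.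
Qed.

Lemma mind i (j : 'I_K.+1) : measurable_fun setT (fun t => (\1_(Iv (R:=R) j) (X i t) : R)).
Proof.
have h1 : measurable_fun setT (\1_(Iv (R:=R) j) : R -> R).
  by apply: measurable_realfun.measurable_indic; apply: Iv_measurable.
exact: (measurableT_comp h1 (measurable_funP (X i))).
Qed.

Definition pp i j := fine (P (pre i j)).

Lemma ppE i (j : 'I_K.+1) : (pp i j)%:E = P (pre i j).
Proof.
rewrite fineK // ge0_fin_numE ?measure_ge0 //.
by rewrite (le_lt_trans (probability_le1 _ (mpre i j))) // ltey.
Qed.

Lemma pp0 i (j : 'I_K.+1) : 0 <= pp i j.
Proof. by apply: fine_ge0; apply: measure_ge0. Qed.

Lemma ppint i (j : 'I_K.+1) : P (pre i j) = (\int[P]_t (\1_(Iv j) (X i t) : R)%:E)%E.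
Proof.
rewrite -(setIT (pre i j)) -integral_indic //; try exact: mpre.
Qed.

Lemma ppsum i : \sum_j pp i j = 1.
Proof.
apply/eqP; rewrite -(@eqe R) -sumEFin.
under eq_bigr do rewrite ppE ppint.
rewrite -ge0_integral_sum //.
- rewrite (eq_integral (fun _ => 1%E)); last first.
    by move=> t _; rewrite sumEFin Iv_sum.
  by rewrite integral_cst // mul1e; apply/eqP; exact: probability_setT.
- by move=> j; apply/measurable_realfun.measurable_EFinP; exact: mind.
Qed.

Lemma ppvsum i (nu : R) : ('E_P[X i] <= nu%:E)%E ->
  \sum_j pp i j * (j%:R / K%:R) <= nu + K%:R^-1.
Proof.
move=> hE.
have Kp : 0 < K%:R :> R by rewrite ltr0n.
have e (j : 'I_K.+1) : ((pp i j * (j%:R / K%:R))%:E = \int[P]_t ((j%:R / K%:R) * \1_(Iv j) (X i t))%:E)%E.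
  rewrite mulrC EFinM ppE ppint -ge0_integralZl_EFin //.
  - by apply/measurable_realfun.measurable_EFinP; exact: mind.
rewrite -lee_fin -sumEFin.
under eq_bigr do rewrite e.
rewrite -ge0_integral_sum //; last first.
  move=> j; apply/measurable_realfun.measurable_EFinP.
  by apply: measurable_realfun.measurable_funM; [exact: measurable_cst | exact: mind].
apply: le_trans (_ : \int[P]_t (X i t + K%:R^-1)%:E <= _)%E.
  apply: ge0_le_integral => //.
  - by move=> t _; rewrite sumEFin lee_fin; apply: sumr_ge0 => j _;
      rewrite mulr_ge0 ?divr_ge0 ?indicE ?ler0n // ltW.
  - apply: emeasurable_sum => j; apply/measurable_realfun.measurable_EFinP.
    by apply: measurable_realfun.measurable_funM; [exact: measurable_cst | exact: mind].
  - apply/measurable_realfun.measurable_EFinP; apply: measurable_realfun.measurable_funD => //.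
  - by move=> t _; rewrite sumEFin lee_fin; apply: Iv_vsum.
under eq_integral do rewrite EFinD.
rewrite ge0_integralD //.
- have hc : (\int[P]_x (K%:R^-1)%:E)%E = (K%:R^-1)%:E.
    rewrite integral_cst // [X in (_ * X)%E](_ : _ = 1%E) ?mule1 //; exact: probability_setT.
  rewrite hc.
  rewrite -expectation_def EFinD.
  by apply: leeD.
- by move=> t _; rewrite lee_fin; have /andP[] := hX01 i t.
- by apply/measurable_realfun.measurable_EFinP; exact: measurable_funP.
Qed.

Definition AF (f : {ffun 'I_n -> 'I_K.+1}) : set T :=
  \bigcap_(i in [set j | j \in [set: 'I_n]%SET]) pre i (f i).

Lemma mAF f : measurable (AF f).
Proof. by apply: fin_bigcap_measurable; [exact: finite_finset | move=> k _; exact: mpre]. Qed.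

Lemma PAF f : P (AF f) = (\prod_i pp i (f i))%:E.
Proof.
rewrite /AF /pre hind; last by move=> i; exact: Iv_measurable.
rewrite -prodEFin; apply: eq_big => // i; first by rewrite inE.
by rewrite ppE.
Qed.

Lemma AF_mem f t : AF f t <-> forall i, Iv (f i) (X i t).
Proof.
split => [h i|h i _]; last exact: h.
by apply: h; rewrite /= inE.
Qed.

Lemma pointwise (lam : R) t : 0 <= lam ->
  expR (lam * (\sum_i X i t) ^+ 2) <=
  \sum_(f : {ffun 'I_n -> 'I_K.+1}) expR (lam * (\sum_i ((f i)%:R / K%:R)) ^+ 2) * \1_(AF f) t.
Proof.
move=> lam0.
have h1 : \prod_i \sum_(j < K.+1) (\1_(Iv (R:=R) j) (X i t) : R) = 1.
  by rewrite big1 // => i _; apply: Iv_sum.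
apply: (le_trans (_ : _ <= expR (lam * (\sum_i X i t) ^+ 2) *
   \prod_i \sum_(j < K.+1) (\1_(Iv (R:=R) j) (X i t) : R))).
  by rewrite h1 mulr1.
rewrite bigA_distr_bigA mulr_sumr.
apply: ler_sum => f _.
case: (pselect (AF f t)) => hA.
- have hi := (AF_mem f t).1 hA.
  have hp : \prod_i (\1_(Iv (R:=R) (f i)) (X i t) : R) = 1.
    by apply: big1 => i _; rewrite indicE mem_set.
  rewrite hp.
  rewrite indicE mem_set // /= !mulr1 ler_expR ler_wpM2l //.
  have ha : 0 <= \sum_i X i t by apply: sumr_ge0 => i _; have /andP[] := hX01 i t.
  have hb : \sum_i X i t <= \sum_i ((f i)%:R / K%:R).
    apply: ler_sum => i _; have /andP[x0 _] := hX01 i t.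
    by have [] := Iv_bound K0 x0 (hi i).
  set a := \sum_i X i t in ha hb *; set b := \sum_i _ in hb *.
  nra.
- have : ~ (forall i, Iv (f i) (X i t)) by move=> h; apply: hA; apply/AF_mem.
  move/existsNP => [i hi].
  have hp : \prod_i (\1_(Iv (R:=R) (f i)) (X i t) : R) = 0.
    by rewrite (bigD1 i) //= indicE memNset // mul0r.
  by rewrite hp mulr0 indicE memNset //= mulr0.
Qed.

Lemma disc_bound (nu c lam : R) :
  (forall i, ('E_P[X i] <= nu%:E)%E) -> 1 <= c -> 0 <= nu ->
  c * (nu + K%:R^-1) < 1 -> 0 <= lam ->
  lam * (2 * n%:R - 1) <= ln c / (1 - c * (nu + K%:R^-1)) ->
  (\int[P]_t (expR (lam * (\sum_(i < n) X i t) ^+ 2))%:E <=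
   (expR (lam * psi (c * (nu + K%:R^-1)) n 0))%:E)%E.
Proof.
move=> hE c1 nu0 hcmu lam0 hlam.
have Kp : 0 < K%:R :> R by rewrite ltr0n.
pose cf (f : {ffun 'I_n -> 'I_K.+1}) := expR (lam * (\sum_i ((f i)%:R / K%:R)) ^+ 2).
apply: le_trans (_ : \int[P]_t (\sum_f cf f * \1_(AF f) t)%:E <= _)%E.
  apply: ge0_le_integral => //.
  - apply/measurable_realfun.measurable_EFinP.
    apply: measurableT_comp; first exact: measurable_realfun.measurable_expR.
    apply: measurable_realfun.measurable_funM; first exact: measurable_cst.
    apply: measurable_realfun.measurable_funX; apply: measurable_sum => i.
    exact: measurable_funP.
  - apply/measurable_realfun.measurable_EFinP; apply: measurable_sum => f.
    apply: measurable_realfun.measurable_funM; first exact: measurable_cst.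
    by apply: measurable_realfun.measurable_indic; exact: mAF.
  - by move=> t _; rewrite lee_fin; apply: pointwise.
have e f : (\int[P]_t (cf f * \1_(AF f) t)%:E = (cf f * \prod_i pp i (f i))%:E)%E.
  under eq_integral do rewrite EFinM.
  rewrite ge0_integralZl_EFin //.
  - rewrite integral_indic ?setIT ?EFinM; [congr (_ * _)%E; exact: PAF | exact: measurableT | exact: (mAF f)].
  - apply/measurable_realfun.measurable_EFinP.
    by apply: measurable_realfun.measurable_indic; exact: mAF.
  - exact: expR_ge0.
under eq_integral do rewrite -sumEFin.
rewrite ge0_integral_sum //; last first.
- by move=> f t _; rewrite lee_fin mulr_ge0 ?expR_ge0 // indicE ler0n.
- move=> f; apply/measurable_realfun.measurable_EFinP.
  apply: measurable_realfun.measurable_funM; first exact: measurable_cst.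
  by apply: measurable_realfun.measurable_indic; exact: mAF.
under eq_bigr do rewrite e.
rewrite sumEFin lee_fin.
have := @alg_bound R _ (fun j : 'I_K.+1 => j%:R / K%:R) c (nu + K%:R^-1) lam n%:R n c1.
have v01 (j : 'I_K.+1) : 0 <= (j%:R / K%:R : R) <= 1.
  apply/andP; split; first by rewrite divr_ge0 // ltW.
  by rewrite ler_pdivrMr // mul1r ler_nat -ltnS.
have mu0 : 0 <= nu + K%:R^-1 by rewrite addr_ge0 // invr_ge0 ltW.
move=> /(_ mu0 hcmu lam0 hlam v01 pp 0) h.
apply: le_trans _ (h _ _ _ _ _) => //.
- by under [X in _ <= X]eq_bigr do rewrite add0r.
- by move=> i j; exact: pp0.
- by move=> i; rewrite ppsum.
- by move=> i; exact: ppvsum.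
- by rewrite add0r.
Qed.

End M.


Lemma real_tail (R : realType) (n : nat) (nu c lam eps dl : R) :
  0 <= nu <= 1 -> 1 <= c -> 0 <= lam -> 0 < eps -> 0 < dl -> dl <= 1 ->
  (expR (lam * c * n%:R * nu * (1 + c * n%:R * nu)) + eps) *
    (lam * n%:R * c * (3 * n%:R * c + 1) + 1) * dl <= eps ->
  expR (lam * psi (c * (nu + dl)) n 0) <=
  expR (lam * c * n%:R * nu * (1 + c * n%:R * nu)) + eps.
Proof.
move=> /andP[nu0 nu1] c1 lam0 eps0 dl0 dl1 hd.
set E := expR (lam * c * n%:R * nu * (1 + c * n%:R * nu)) in hd *.
set B := lam * n%:R * c * (3 * n%:R * c + 1) in hd.
have n0 : 0 <= n%:R :> R by rewrite ler0n.
have c0 : 0 <= c by lra.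
have nc0 : 0 <= n%:R * c by rewrite mulr_ge0.
have B0 : 0 <= B.
  rewrite /B !mulr_ge0 //; rewrite -mulrA; apply: addr_ge0 => //; rewrite mulr_ge0 //.
have E0 : 0 < E by apply: expR_gt0.
have hD : lam * psi (c * (nu + dl)) n 0 <= lam * c * n%:R * nu * (1 + c * n%:R * nu) + B * dl.
  rewrite /psi /B add0r.
  have h1 : 0 <= lam * n%:R * c by rewrite !mulr_ge0.
  have : lam * n%:R * c * dl * (2 * n%:R * c * nu + n%:R * c * dl)
       <= lam * n%:R * c * dl * (3 * n%:R * c).
    rewrite ler_wpM2l ?mulr_ge0 //; try lra.
    nra.
  move=> h2.
  have -> : lam * ((n%:R * (c * (nu + dl))) ^+ 2 + n%:R * (c * (nu + dl))) =
    lam * c * n%:R * nu * (1 + c * n%:R * nu) +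
    lam * n%:R * c * dl * (2 * n%:R * c * nu + n%:R * c * dl) + lam * n%:R * c * dl by ring.
  have -> : lam * n%:R * c * (3 * n%:R * c + 1) * dl =
    lam * n%:R * c * dl * (3 * n%:R * c) + lam * n%:R * c * dl by ring.
  lra.
have hBd' : (E + eps) * (B * dl) <= eps.
  apply: le_trans hd.
  have : 0 <= (E + eps) * dl by apply: mulr_ge0; lra.
  nra.
have hBd : B * dl < 1 by nra.
have x0 : 0 <= B * dl by apply: mulr_ge0 => //; lra.
have ex : expR (B * dl) <= (1 - B * dl)^-1.
  have := expR_ge1Dx (- (B * dl)); rewrite expRN => h.
  rewrite -[X in X <= _]invrK lef_pV2 ?posrE ?invr_gt0 ?expR_gt0 //; lra.
apply: le_trans (_ : E * expR (B * dl) <= _).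
  by rewrite /E -expRD ler_expR.
apply: le_trans (_ : E * (1 - B * dl)^-1 <= _).
  by rewrite ler_wpM2l // ltW.
rewrite ler_pdivrMr; last lra.
nra.
Qed.


Unset Implicit Arguments.
Set Strict Implicit.


Theorem lemma4 (d : measure_display) (T : measurableType d) (R : realType)
    (P : probability T R) (n : nat) (X : 'I_n -> {RV P >-> R})
    (nu c lam : R) :
  mutually_independent X ->
  (forall i t, 0 <= X i t <= 1) ->
  (forall i, ('E_P[X i] <= nu%:E)%E) ->
  0 <= nu <= 1 ->
  1 <= c -> c * nu < 1 ->
  0 <= lam -> lam <= ln c / ((1 - c * nu) * (4 * n%:R - 3)) ->
  (\int[P]_t (expR (lam * (\sum_(i < n) X i t) ^+ 2))%:E
     <= (expR (lam * c * n%:R * nu * (1 + c * n%:R * nu)))%:E)%E.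
Proof.
move=> hind hX01 hE hnu c1 hcnu lam0 hlam.
have /andP[nu0 nu1] := hnu.
apply/lee_addgt0Pr => eps eps0.
set E := expR (lam * c * n%:R * nu * (1 + c * n%:R * nu)).
set B := lam * n%:R * c * (3 * n%:R * c + 1).
have c0 : 0 < c by lra.
have n0 : 0 <= n%:R :> R by rewrite ler0n.
have nc0 : 0 <= n%:R * c by rewrite mulr_ge0 // ltW.
have B0 : 0 <= B.
  have c0' : 0 <= c by lra.
  rewrite /B !mulr_ge0 //; rewrite -mulrA; apply: addr_ge0 => //; rewrite mulr_ge0 //.
have E0 : 0 < E by apply: expR_gt0.
pose d1 := (1 - c * nu) / (2 * c).
pose d2 := eps / ((E + eps) * (B + 1)).
have d1p : 0 < d1 by rewrite /d1 divr_gt0 //; lra.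
have d2p : 0 < d2 by rewrite /d2 divr_gt0 // mulr_gt0 //; lra.
pose d0 := Num.min 1 (Num.min d1 d2).
have d0p : 0 < d0 by rewrite /d0 !lt_min d1p d2p ltr01.
have [k] := ltr_add_invr d0p; rewrite add0r => hk.
set dl := k.+1%:R^-1 in hk.
have dl0 : 0 < dl by rewrite /dl invr_gt0 ltr0n.
move: hk; rewrite /d0 !lt_min => /andP[dl1 /andP[hd1 hd2]].
have hcmu : c * (nu + dl) < 1.
  move: hd1; rewrite /d1 ltr_pdivlMr; last lra.
  lra.
have hlamK : lam * (2 * n%:R - 1) <= ln c / (1 - c * (nu + dl)).
  have lnc0 : 0 <= ln c by apply: ln_ge0.
  have q0 : 0 < 1 - c * (nu + dl) by lra.
  rewrite ler_pdivlMr //.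
  clear -hlam n0 nc0 lam0 c1 c0 hcnu q0 lnc0 dl0 nu0 hcmu.
  case: n hlam n0 nc0 => [|m] hlam n0 nc0.
    rewrite mulr0 sub0r; have : 0 <= lam * 1 * (1 - c * (nu + dl)).
      by rewrite mulr1 mulr_ge0 // ltW.
    nra.
  have hm : 1 <= m.+1%:R :> R by rewrite ler1n.
  move: hlam; rewrite ler_pdivlMr; last by apply: mulr_gt0; lra.
  move=> hlam; apply: le_trans hlam.
  have hcd : 0 <= c * dl by rewrite mulr_ge0 // ltW.
  have : 0 <= lam * (2 * m.+1%:R - 2) by apply: mulr_ge0 => //; lra.
  nra.
have := disc_bound hind hX01 (ltn0Sn k) hE c1 nu0 hcmu lam0 hlamK.
rewrite -/dl => h; apply: le_trans h _.
rewrite -EFinD lee_fin; apply: real_tail => //; first lra.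
move: hd2; rewrite /d2 ltr_pdivlMr; last by apply: mulr_gt0; lra.
move=> h; apply: ltW; rewrite -/E -/B; lra.
Qed.
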